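(* Let $P\subset\mathbb{R}^d$ with $|P|=n$, let $D=\operatorname{diam}P$ and let $r\in[n]$. Then there is a point $q\in\mathbb{R}^d$ such that the closed ball $B\!\left(q,\frac{3.5D}{\sqrt r}\right)$ intersects the convex hull of at least $r^{-r}\binom nr$ of the $r$-element subsets of $P$.
   Context: $B(q,\rho)$ is the closed Euclidean ball of centre $q$ and radius $\rho$; $\operatorname{diam}$ is the Euclidean diameter. *)

(* Defs.v *)
From HB Require Import structures.
From mathcomp Require Import all_boot all_order all_algebra.
From mathcomp Require Export reals.
Set Implicit Arguments. Unset Strict Implicit. Unset Printing Implicit Defensive.
Import Order.TTheory GRing.Theory Num.Theory.
Local Open Scope ring_scope.

Definition enorm (R : realType) (d : nat) (v : 'rV[R]_d) : R :=
  Num.sqrt (\sum_(i < d) v 0 i ^+ 2).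
Definition edist (R : realType) (d : nat) (x y : 'rV[R]_d) : R := enorm (x - y).

Definition cball (R : realType) (d : nat) (q : 'rV[R]_d) (rho : R) (x : 'rV[R]_d) : Prop :=
  edist x q <= rho.

Definition diam (R : realType) (d n : nat) (P : 'I_n -> 'rV[R]_d) : R :=
  \big[Num.max/0]_(i < n) \big[Num.max/0]_(j < n) edist (P i) (P j).

Definition in_conv_hull (R : realType) (d n : nat) (P : 'I_n -> 'rV[R]_d)
  (S : {set 'I_n}) (x : 'rV[R]_d) : Prop :=
  exists w : 'I_n -> R,
    [/\ forall i, 0 <= w i, forall i, i \notin S -> w i = 0,
        \sum_(i < n) w i = 1 & x = \sum_(i < n) w i *: P i].

(* Main.v *)
Require Import Defs.
From mathcomp Require Import all_boot all_order all_algebra.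
From mathcomp Require Import reals.
From mathcomp Require Import ring lra zify.
Import Order.TTheory GRing.Theory Num.Theory.
Set Implicit Arguments. Unset Strict Implicit.
Local Open Scope ring_scope.
Lemma sum_sq_le (R : realType) (m : nat) (y : 'I_m -> R) :
  (\sum_k y k) ^+ 2 <= m%:R * \sum_k y k ^+ 2.
Proof.
have H0 : 0 <= \sum_k \sum_l (y k - y l) ^+ 2.
  by apply: sumr_ge0 => k _; apply: sumr_ge0 => l _; apply: sqr_ge0.
have E : forall k, \sum_l (y k - y l) ^+ 2 =
   m%:R * y k ^+ 2 - 2 * y k * (\sum_l y l) + \sum_l y l ^+ 2.
  move=> k; rewrite (eq_bigr (fun l => y k ^+ 2 - 2 * y k * y l + y l ^+ 2)); last first.
    move=> l _. clear H0. ring.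
  rewrite big_split /= sumrB sumr_const card_ord -mulr_sumr.
  by rewrite [m%:R * _]mulr_natl.
rewrite (eq_bigr _ (fun k _ => E k)) in H0.
rewrite big_split /= sumrB -mulr_sumr -!mulr_suml sumr_const card_ord in H0.
set Y := \sum_l y l in H0 *; set S := \sum_l y l ^+ 2 in H0 *.
rewrite -mulr_sumr in H0.
have : 0 <= (m%:R * S - Y ^+ 2) * 2.
  move: H0; rewrite -[S *+ m]mulr_natl. 
  rewrite -/Y => H1. nra.
nra.
Qed.
Lemma sum_tuple1 (R : realType) (n r : nat) (k : 'I_r) (g : 'I_n -> R) :
  \sum_(t : {ffun 'I_r -> 'I_n}) g (t k) = n%:R ^+ r.-1 * \sum_i g i.
Proof.
have := @bigA_distr_bigA R 0 1 *%R +%R _ _ (fun (k' : 'I_r) (j : 'I_n) => if k' == k then g j else 1).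
rewrite (bigD1 k) //= eqxx.
rewrite [\prod_(_ | _) _](eq_bigr (fun _ => n%:R)); last first.
  by move=> k1 /negbTE ->; rewrite sumr_const card_ord.
rewrite prodr_const cardC1 card_ord mulrC => ->.
apply: eq_bigr => t _.
rewrite (bigD1 k) //= eqxx big1 ?mulr1 //.
by move=> k' /negbTE ->.
Qed.

Lemma sum_tuple2 (R : realType) (n r : nat) (k l : 'I_r) (x : 'I_n -> R) :
  k != l -> \sum_i x i = 0 ->
  \sum_(t : {ffun 'I_r -> 'I_n}) x (t k) * x (t l) = 0.
Proof.
move=> kl x0.
have := @bigA_distr_bigA R 0 1 *%R +%R _ _ (fun (k' : 'I_r) (j : 'I_n) =>
   if k' == k then x j else if k' == l then x j else 1).
rewrite (bigD1 k) //= eqxx x0 mul0r => /esym E.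
rewrite -[RHS]E.
apply: eq_bigr => t _.
rewrite (bigD1 k) //= eqxx (bigD1 l) //= 1?eq_sym // (negbTE kl) eqxx.
rewrite big1 ?mulr1 //.
by move=> k' /andP [/negbTE -> /negbTE ->].
Qed.

Lemma var_tuples (R : realType) (n r : nat) (x : 'I_n -> R) :
  \sum_i x i = 0 ->
  \sum_(t : {ffun 'I_r -> 'I_n}) (\sum_k x (t k)) ^+ 2 =
  r%:R * n%:R ^+ r.-1 * \sum_i x i ^+ 2.
Proof.
move=> x0.
have E : forall t : {ffun 'I_r -> 'I_n},
   (\sum_k x (t k)) ^+ 2 = \sum_k \sum_l x (t k) * x (t l).
  by move=> t; rewrite expr2 mulr_suml; apply: eq_bigr => k _; rewrite mulr_sumr.
rewrite (eq_bigr _ (fun t _ => E t)) exchange_big /=.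
rewrite (eq_bigr (fun _ => n%:R ^+ r.-1 * \sum_i x i ^+ 2)).
  by rewrite sumr_const card_ord -mulrA [r%:R * _]mulr_natl.
move=> k _; rewrite exchange_big /= (bigD1 k) //= [X in _ + X]big1 ?addr0.
  by rewrite -(sum_tuple1 k (fun i => x i ^+ 2)); apply: eq_bigr => t _; rewrite expr2.
by move=> l lk; apply: sum_tuple2; rewrite // eq_sym.
Qed.
Lemma le_bigmax0 (R : realType) (n : nat) (F : 'I_n -> R) (i : 'I_n) :
  F i <= \big[Num.max/0]_(j < n) F j.
Proof.
have : i \in index_enum 'I_n by rewrite mem_index_enum.
elim: (index_enum 'I_n) => // j s IH.
rewrite in_cons big_cons le_max => /orP [/eqP <-|/IH ->]; by rewrite ?lexx ?orbT.
Qed.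

Lemma bigmax0_ge0 (R : realType) (n : nat) (F : 'I_n -> R) :
  0 <= \big[Num.max/0]_(j < n) F j.
Proof.
elim: (index_enum 'I_n) => [|j s IH]; first by rewrite big_nil.
by rewrite big_cons le_max IH orbT.
Qed.

Lemma diam_ge0 (R : realType) (d n : nat) (P : 'I_n -> 'rV[R]_d) : 0 <= diam P.
Proof. exact: bigmax0_ge0. Qed.

Lemma edist_le_diam (R : realType) (d n : nat) (P : 'I_n -> 'rV[R]_d) i j :
  edist (P i) (P j) <= diam P.
Proof.
have h1 := le_bigmax0 (fun i => \big[Num.max/0]_(j < n) edist (P i) (P j)) i.
have h2 := le_bigmax0 (fun j => edist (P i) (P j)) j.
exact: (le_trans h2 h1).
Qed.

Definition sqn (R : realType) (d : nat) (v : 'rV[R]_d) : R := \sum_(i < d) v 0 i ^+ 2.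

Lemma sqn_ge0 (R : realType) (d : nat) (v : 'rV[R]_d) : 0 <= sqn v.
Proof. by apply: sumr_ge0 => i _; apply: sqr_ge0. Qed.

Lemma edist_sqn (R : realType) (d : nat) (x y : 'rV[R]_d) :
  edist x y = Num.sqrt (sqn (x - y)).
Proof. by []. Qed.

Lemma sqnZ (R : realType) (d : nat) (c : R) (v : 'rV[R]_d) :
  sqn (c *: v) = c ^+ 2 * sqn v.
Proof.
rewrite /sqn mulr_sumr; apply: eq_bigr => i _; by rewrite mxE exprMn.
Qed.

Lemma sqn_le_diam (R : realType) (d n : nat) (P : 'I_n -> 'rV[R]_d) i j :
  sqn (P i - P j) <= diam P ^+ 2.
Proof.
have h := edist_le_diam P i j; rewrite edist_sqn in h.
have h0 : 0 <= Num.sqrt (sqn (P i - P j)) by apply: sqrtr_ge0.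
rewrite -(sqr_sqrtr (sqn_ge0 (P i - P j))).
by rewrite lerXn2r // ?nnegrE // (le_trans h0 h).
Qed.

Lemma sqn_sum_le (R : realType) (d m : nat) (v : 'I_m -> 'rV[R]_d) :
  sqn (\sum_k v k) <= m%:R * \sum_k sqn (v k).
Proof.
rewrite /sqn exchange_big /= mulr_sumr; apply: ler_sum => i _.
rewrite summxE; exact: sum_sq_le.
Qed.

Lemma exists_superset (n : nat) (A : {set 'I_n}) (k : nat) :
  (#|A| + k <= n)%N -> exists B : {set 'I_n}, A \subset B /\ #|B| = (#|A| + k)%N.
Proof.
elim: k A => [|k IH] A H; first by exists A; rewrite addn0.
have [x xA] : exists x, x \notin A.
  apply/existsP; rewrite -negb_forall; apply/negP => /forallP H2.
  have : #|A| = n.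
    apply/eqP; rewrite eqn_leq; apply/andP; split.
      by rewrite -[X in (_ <= X)%N]card_ord max_card.
    by rewrite -[X in (X <= _)%N]card_ord; apply/subset_leq_card/subsetP => y _; apply: H2.
  by move=> E; move: H; rewrite E addnS ltnNge leq_addr.
have H' : (#|x |: A| + k <= n)%N by rewrite cardsU1 xA add1n addSnnS.
have [B [sB cB]] := IH _ H'.
exists B; split; last by rewrite cB cardsU1 xA add1n addSnnS.
by apply: subset_trans sB; apply: subsetUr.
Qed.

Lemma regroup (V : zmodType) (n r : nat) (t : 'I_r -> 'I_n) (f : 'I_n -> V) :
  \sum_k f (t k) = \sum_i f i *+ #|[set k | t k == i]|.
Proof.
rewrite (partition_big t predT) //=; apply: eq_bigr => i _.
rewrite -sumr_const; apply: eq_big => k; first by rewrite inE.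
by move=> /eqP ->.
Qed.

Lemma hull_centroid (R : realType) (d n r : nat) (P : 'I_n -> 'rV[R]_d)
   (S : {set 'I_n}) (t : 'I_r -> 'I_n) :
  (0 < r)%N -> (forall k, t k \in S) ->
  in_conv_hull P S (r%:R^-1 *: \sum_k P (t k)).
Proof.
move=> r0 tS.
have rne0 : (r%:R : R) != 0 by rewrite pnatr_eq0 -lt0n.
exists (fun i => #|[set k | t k == i]|%:R / r%:R); split.
- by move=> i; rewrite divr_ge0 ?ler0n.
- move=> i iS.
  suff -> : #|[set k | t k == i]| = 0%N by rewrite mul0r.
  apply/eqP; rewrite cards_eq0; apply/eqP/setP => k; rewrite !inE.
  apply/negbTE; apply/eqP => E; move: (tS k); rewrite E => iS'.
  by rewrite iS' in iS.
- rewrite -mulr_suml.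
  have := regroup t (fun _ => (1 : R)).
  rewrite sumr_const card_ord => E.
  rewrite (eq_bigr (fun i => 1 *+ #|[set k | t k == i]|)) -?E ?mulfV //.
- rewrite regroup scaler_sumr; apply: eq_bigr => i _.
  by rewrite -scaler_nat scalerA mulrC.
Qed.

Lemma count_sets (n r : nat) (G : {set {ffun 'I_r -> 'I_n}}) : (r <= n)%N ->
  (#|G| <= #|[set S : {set 'I_n} | (#|S| == r) &&
       [exists t, (t \in G) && [forall k, t k \in S]]]| * r ^ r)%N.
Proof.
move=> rn.
set F := [set S : {set 'I_n} | _].
have step1 : forall t, t \in G ->
    (1 <= \sum_(S in F) ([forall k, t k \in S] : nat))%N.
  move=> t tG.
  set A := [set t k | k in 'I_r].
  have cA : (#|A| <= r)%N by rewrite -[X in (_ <= X)%N]card_ord leq_imset_card.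
  have [B [sAB cB]] := @exists_superset n A (r - #|A|) ltac:(by rewrite subnKC).
  rewrite subnKC // in cB.
  have tB : [forall k, t k \in B].
    by apply/forallP => k; apply: (subsetP sAB); apply: imset_f.
  have BF : B \in F.
    by rewrite inE cB eqxx /=; apply/existsP; exists t; rewrite tG tB.
  by rewrite (bigD1 B) //= tB leq_addr.
apply: (@leq_trans (\sum_(t in G) \sum_(S in F) ([forall k, t k \in S] : nat))).
  by rewrite -sum1_card; apply: leq_sum => t tG; apply: step1.
rewrite exchange_big /= -sum_nat_const; apply: leq_sum => S SF.
apply: (@leq_trans (\sum_(t : {ffun 'I_r -> 'I_n}) ([forall k, t k \in S] : nat))).
  by rewrite [X in (_ <= X)%N](bigID (mem G)) /= leq_addr.
have cS : #|S| = r by move: SF; rewrite inE => /andP [/eqP].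
have -> : (r ^ r = #|S| ^ #|'I_r|)%N by rewrite cS card_ord.
rewrite -card_ffun_on.
rewrite -sum1_card [X in (_ <= X)%N]big_mkcond /= leq_eqVlt; apply/orP; left; apply/eqP.
apply: eq_bigr => t _; rewrite !inE.
by case: [forall k, t k \in S].
Qed.

Lemma binom_le (n r : nat) : ('C(n, r) * r`! <= n ^ r)%N.
Proof.
rewrite bin_ffact.
have := card_inj_ffuns 'I_r 'I_n; rewrite !card_ord => <-.
have -> : (n ^ r = #|{ffun 'I_r -> 'I_n}|)%N by rewrite card_ffun !card_ord.
exact: max_card.
Qed.

Lemma scale_bound (R : realType) (N X Y D2 : R) :
  0 < N -> X <= N * Y -> Y <= N * D2 -> N^-1 ^+ 2 * X <= D2.
Proof.
move=> N0 h1 h2.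
have h3 : X <= N ^+ 2 * D2.
  by apply: le_trans h1 _; rewrite expr2 -mulrA ler_wpM2l // ltW.
by rewrite exprVn ler_pdivrMl // exprn_gt0.
Qed.

Unset Implicit Arguments. Set Strict Implicit.

Theorem theorem7p2 (R : realType) (d n : nat) (P : 'I_n -> 'rV[R]_d)
  (HP : injective P) (r : nat) (Hr1 : (1 <= r)%N) (Hrn : (r <= n)%N) :
  exists q : 'rV[R]_d,
    exists F : {set {set 'I_n}},
      (forall S, S \in F ->
         #|S| = r /\
         exists x, in_conv_hull P S x /\ cball q (7 / 2 * diam P / Num.sqrt (r%:R : R)) x) /\
      (r%:R : R) ^- r * ('C(n, r))%:R <= (#|F|)%:R.
Proof.
have n0 : (0 < n)%N by apply: leq_trans Hrn.
set D := diam P.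
set rho := 7 / 2 * D / Num.sqrt (r%:R : R).
have D0 : 0 <= D := diam_ge0 P.
have rpos : (0 : R) < r%:R by rewrite ltr0n.
have npos : (0 : R) < n%:R by rewrite ltr0n.
have rne0 : (r%:R : R) != 0 by rewrite gt_eqF.
have nne0 : (n%:R : R) != 0 by rewrite gt_eqF.
have sr : Num.sqrt (r%:R : R) ^+ 2 = r%:R := sqr_sqrtr (ltW rpos).
have srpos : 0 < Num.sqrt (r%:R : R) by rewrite sqrtr_gt0.
have rho0 : 0 <= rho.
  apply: divr_ge0; [apply: mulr_ge0 => //; lra | exact: sqrtr_ge0].
have rho2 : rho ^+ 2 = 49 / 4 * (D ^+ 2 / r%:R).
  rewrite /rho expr_div_n sr exprMn expr_div_n.
  by field; rewrite rne0.
set mu := n%:R^-1 *: \sum_i P i.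
set a := fun i => P i - mu.
have Sa : \sum_i a i = 0.
  rewrite /a sumrB sumr_const card_ord /mu -scaler_nat scalerA mulfV //.
  by rewrite scale1r subrr.
have aE : forall i, a i = n%:R^-1 *: \sum_j (P i - P j).
  move=> i; rewrite sumrB sumr_const card_ord -scaler_nat scalerBr scalerA.
  by rewrite mulVf // scale1r.
have aD : forall i, sqn (a i) <= D ^+ 2.
  move=> i; rewrite aE sqnZ; apply: scale_bound npos (sqn_sum_le _) _.
  apply: le_trans (ler_sum _ (fun j _ => sqn_le_diam P i j)) _.
  by rewrite sumr_const card_ord mulr_natl.
pose T := {ffun 'I_r -> 'I_n}.
pose c := fun t : T => r%:R^-1 *: \sum_k P (t k).
have cE : forall t : T, c t - mu = r%:R^-1 *: \sum_k a (t k).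
  move=> t; rewrite /c /a sumrB sumr_const card_ord -scaler_nat scalerBr scalerA.
  by rewrite mulVf // scale1r.
have cD : forall t : T, sqn (c t - mu) <= D ^+ 2.
  move=> t; rewrite cE sqnZ; apply: scale_bound rpos (sqn_sum_le _) _.
  apply: le_trans (ler_sum _ (fun k _ => aD (t k))) _.
  by rewrite sumr_const card_ord mulr_natl.
have Ssum : \sum_(t : T) sqn (c t - mu) =
    r%:R^-1 * n%:R ^+ r.-1 * \sum_i sqn (a i).
  under eq_bigr => t _ do rewrite cE sqnZ.
  rewrite -mulr_sumr /sqn.
  under eq_bigr => t _ do under eq_bigr => j _ do rewrite summxE.
  rewrite exchange_big /=.
  have V : forall j, \sum_(t : T) (\sum_k a (t k) 0 j) ^+ 2 =
      r%:R * n%:R ^+ r.-1 * \sum_i a i 0 j ^+ 2.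
    by move=> j; apply: (@var_tuples R n r (fun i => a i 0 j)); rewrite -summxE Sa mxE.
  under eq_bigr => j _ do rewrite V.
  rewrite -mulr_sumr exchange_big /= mulrA; congr (_ * _).
  by rewrite expr2 -!mulrA mulKf.
have Sbound : \sum_(t : T) sqn (c t - mu) <= n%:R ^+ r * (D ^+ 2 / r%:R).
  rewrite Ssum.
  have h : \sum_i sqn (a i) <= n%:R * D ^+ 2.
    apply: le_trans (ler_sum _ (fun i _ => aD i)) _.
    by rewrite sumr_const card_ord mulr_natl.
  have -> : n%:R ^+ r * (D ^+ 2 / r%:R) = r%:R^-1 * n%:R ^+ r.-1 * (n%:R * D ^+ 2).
    rewrite -[in n%:R ^+ r](prednK Hr1) exprS /=; field; exact: rne0.
  apply: ler_wpM2l => //.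
  by rewrite mulr_ge0 ?invr_ge0 ?ler0n ?exprn_ge0 ?ler0n.
pose G := [set t : T | edist (c t) mu <= rho].
have good_of : forall t : T, sqn (c t - mu) <= rho ^+ 2 -> t \in G.
  move=> t h; rewrite inE edist_sqn -(ger0_norm rho0) -sqrtr_sqr.
  by rewrite ler_sqrt // sqr_ge0.
have cardG : (#|G| + #|~: G| = n ^ r)%N by rewrite cardsC card_ffun !card_ord.
have CG : ('C(n, r) <= #|G|)%N.
  have hb := binom_le n r.
  case: (lerP (D ^+ 2) (rho ^+ 2)) => hD.
    have b0 : #|~: G| = 0%N.
      apply/eqP; rewrite cards_eq0; apply/eqP/setP => t.
      by rewrite in_setC in_set0 good_of // (le_trans (cD t) hD).
    rewrite b0 addn0 in cardG; rewrite cardG.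
    by apply: leq_trans hb; rewrite leq_pmulr // fact_gt0.
  have r2 : (1 < r)%N.
    rewrite ltn_neqAle Hr1 andbT; apply/eqP => r1.
    move: hD; rewrite rho2 -r1 divr1 => hD.
    have : 0 <= D ^+ 2 := sqr_ge0 D.
    lra.
  have K0 : 0 < D ^+ 2 / r%:R.
    by rewrite divr_gt0 //; apply: le_lt_trans hD; apply: sqr_ge0.
  have bad : (#|~: G|%:R : R) * rho ^+ 2 <= n%:R ^+ r * (D ^+ 2 / r%:R).
    apply: le_trans Sbound.
    rewrite (bigID (mem G)) /=.
    have h1 : 0 <= \sum_(t | t \in G) sqn (c t - mu).
      by apply: sumr_ge0 => t _; apply: sqn_ge0.
    suff h2 : (#|~: G|%:R : R) * rho ^+ 2 <= \sum_(t | t \notin G) sqn (c t - mu).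
      by lra.
    rewrite (eq_bigl (fun t => t \in ~: G)); last by move=> t; rewrite in_setC.
    rewrite mulr_natl -sumr_const; apply: ler_sum => t.
    rewrite in_setC => tG; rewrite leNgt; apply/negP => h.
    by move/negP: tG; apply; apply: good_of; apply: ltW.
  have hb2 : (#|~: G| * 49 <= 4 * n ^ r)%N.
    rewrite -(ler_nat R) !natrM natrX.
    rewrite rho2 in bad.
    move: bad K0; set K := D ^+ 2 / r%:R; set N := n%:R ^+ r; set B := (#|~: G|%:R : R).
    move=> bad K0; nra.
  have hC : ('C(n, r) * 2 <= n ^ r)%N.
    apply: leq_trans hb; rewrite leq_mul2l.
    by rewrite (leq_trans r2 (fact_geq r)) orbT.
  lia.
have CF := count_sets G Hrn.
exists mu, [set S : {set 'I_n} | (#|S| == r) &&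
       [exists t, (t \in G) && [forall k, t k \in S]]].
split.
  move=> S; rewrite inE => /andP [/eqP cS /existsP [t /andP [tG /forallP tS]]].
  split=> //; exists (c t); split.
    by apply: hull_centroid.
  by move: tG; rewrite inE.
have h := leq_trans CG CF.
rewrite -(ler_nat R) natrM natrX in h.
rewrite -exprVn.
apply: le_trans (ler_wpM2l _ h) _.
  by rewrite exprn_ge0 // invr_ge0 ler0n.
by rewrite mulrC -mulrA -exprMn mulfV // expr1n mulr1.
Qed.
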